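(* The edge-coloring of a complete $k$-edge-colored permutation graph is a Gallai coloring with $k$ colors, i.e., it contains no rainbow triangle.
   Context: A complete $k$-edge-colored graph $G=(V,E_1,\dots,E_k)$ is the complete graph on a finite set $V$ with edges partitioned into $k$ nonempty color classes $E_i$; $G_{|i}=(V,E_i)$. A labeling is a bijection $\ell:V\to\{1,\dots,|V|\}$. A graph $(V,E)$ with labeling $\ell$ is a simple permutation graph of a permutation $\pi$ if for all $u,v$ with $\ell(u)>\ell(v)$: $\{u,v\}\in E$ iff $\pi^{-1}(\ell(u))<\pi^{-1}(\ell(v))$. $G$ is a complete $k$-edge-colored permutation graph if there exist a labeling $\ell$ and permutations $\pi_1,\dots,\pi_k$ with $(G_{|i},\ell)$ a simple permutation graph of $\pi_i$ for all $i$. A rainbow triangle is a set of three vertices whose three edges have pairwise distinct colors; a Gallai coloring of a complete graph with $k$ colors is an edge-coloring with $k$ colors containing no rainbow triangle. *)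

(* Defs.v *)
From mathcomp Require Import all_boot all_order all_fingroup.
Set Implicit Arguments. Unset Strict Implicit. Unset Printing Implicit Defensive.

(* A complete k-edge-colored graph on a finite vertex type V: a coloring
   c of the unordered pairs {u,v} (u <> v) by colors in 'I_k; c is required
   to be symmetric on distinct vertices (its value on the diagonal is
   irrelevant) and every color class E_i must be nonempty. *)
Definition complete_k_edge_colored (V : finType) (k : nat) (c : V -> V -> 'I_k) : Prop :=
  (forall u v : V, u != v -> c u v = c v u) /\
  (forall i : 'I_k, exists u v : V, u != v /\ c u v = i).

Definition color_class (V : finType) (k : nat) (c : V -> V -> 'I_k) (i : 'I_k) (u v : V) : bool :=
  (u != v) && (c u v == i).

(* Labels and permutations are 0-based: 'I_#|V| = {0,..,|V|-1} instead of
   {1,..,|V|}; this order-preserving shift does not affect the definition. *)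
Definition simple_perm_graph (V : finType) (E : V -> V -> bool)
    (l : V -> 'I_#|V|) (pi : {perm 'I_#|V|}) : Prop :=
  forall u v : V, l v < l u -> (E u v <-> (pi^-1)%g (l u) < (pi^-1)%g (l v)).

Definition complete_k_edge_colored_perm_graph (V : finType) (k : nat)
    (c : V -> V -> 'I_k) : Prop :=
  complete_k_edge_colored c /\
  exists (l : V -> 'I_#|V|) (pis : 'I_k -> {perm 'I_#|V|}),
    bijective l /\ forall i : 'I_k, simple_perm_graph (color_class c i) l (pis i).

Definition rainbow_triangle (V : finType) (k : nat) (c : V -> V -> 'I_k) (x y z : V) : Prop :=
  [/\ x != y, y != z, x != z &
      [/\ c x y != c y z, c x y != c x z & c y z != c x z]].

Definition gallai_coloring (V : finType) (k : nat) (c : V -> V -> 'I_k) : Prop :=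
  forall x y z : V, ~ rainbow_triangle c x y z.

(* Main.v *)
Require Import Defs.
From mathcomp Require Import all_boot all_order all_fingroup.

Section S.
Variables (V : finType) (k : nat) (c : V -> V -> 'I_k).
Hypothesis csym : forall u v : V, u != v -> c u v = c v u.

Lemma rb_swap x y z : rainbow_triangle c x y z -> rainbow_triangle c y x z.
Proof.
case=> xy yz xz [h1 h2 h3]; rewrite /rainbow_triangle.
have yx : y != x by rewrite eq_sym.
rewrite (csym _ _ yx); split => //; split; by rewrite // eq_sym.
Qed.

Lemma rb_rot x y z : rainbow_triangle c x y z -> rainbow_triangle c y z x.
Proof.
case=> xy yz xz [h1 h2 h3]; rewrite /rainbow_triangle.
have zx : z != x by rewrite eq_sym.
have yx : y != x by rewrite eq_sym.
rewrite (csym _ _ zx) (csym _ _ yx); split => //; split; by rewrite // eq_sym.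
Qed.
End S.

Theorem corollary6p1 (V : finType) (k : nat) (c : V -> V -> 'I_k) :
  complete_k_edge_colored_perm_graph c -> gallai_coloring c.
Proof.
case=> [[csym _] [l [pis [lbij Hp]]]] x y z.
have linj := bij_inj lbij.
have key : forall p q r, rainbow_triangle c p q r -> l p < l q -> l q < l r -> False.
  move=> p q r [pq qr pr [h1 h2 h3]] lpq lqr.
  have lpr : l p < l r by apply: ltn_trans lqr.
  set g := c p r.
  have A := Hp g r p lpr.
  have B := Hp g q p lpq.
  have C := Hp g r q lqr.
  rewrite /color_class in A B C.
  have a : ((pis g)^-1)%g (l r) < ((pis g)^-1)%g (l p).
    apply/A; rewrite eq_sym pr /= -csym //.
  have b : ~~ (((pis g)^-1)%g (l q) < ((pis g)^-1)%g (l p)).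
    apply/negP => /B; rewrite -(csym _ _ pq) => /andP [_ /eqP]; exact/eqP.
  have cc : ~~ (((pis g)^-1)%g (l r) < ((pis g)^-1)%g (l q)).
    apply/negP => /C; rewrite -(csym _ _ qr) => /andP [_ /eqP]; exact/eqP.
  rewrite -leqNgt in b; rewrite -leqNgt in cc.
  have := leq_trans b cc; rewrite leqNgt a //.
move=> R.
have sw := @rb_swap _ _ c csym; have rt := @rb_rot _ _ c csym.
have [xy yz xz _] := R.
have lxy : (l x : nat) != l y by apply: contra xy => /eqP /val_inj /linj ->.
have lyz : (l y : nat) != l z by apply: contra yz => /eqP /val_inj /linj ->.
have lxz : (l x : nat) != l z by apply: contra xz => /eqP /val_inj /linj ->.
case: (ltngtP (l x) (l y)) => [h1|h1|h1]; last by rewrite h1 eqxx in lxy.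
- case: (ltngtP (l y) (l z)) => [h2|h2|h2]; last by rewrite h2 eqxx in lyz.
  + exact: key R h1 h2.
  + case: (ltngtP (l x) (l z)) => [h3|h3|h3]; last by rewrite h3 eqxx in lxz.
    * exact: key (sw _ _ _ (rt _ _ _ (rt _ _ _ R))) h3 h2.
    * exact: key (rt _ _ _ (rt _ _ _ R)) h3 h1.
- case: (ltngtP (l y) (l z)) => [h2|h2|h2]; last by rewrite h2 eqxx in lyz.
  + case: (ltngtP (l x) (l z)) => [h3|h3|h3]; last by rewrite h3 eqxx in lxz.
    * exact: key (sw _ _ _ R) h1 h3.
    * exact: key (rt _ _ _ R) h2 h3.
  + exact: key (sw _ _ _ (rt _ _ _ R)) h2 h1.
Qed.
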